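(* Let $K$ be a division ring and $G$ a group. If $a\in K[G]$ is one-sided invertible and of rank $2$, then $a$ is invertible. Furthermore, a rank $2$ element $a$ of $K[G]$ is invertible if and only if it is of the form $a=sh(1-rg)$ for some $s,r\in K\setminus\{0\}$ and $g,h\in G$, where $g$ has finite order $n>1$ and $r^n\ne1$; in that case $a^{-1}=(1-r^n)^{-1}(1+rg+r^2g^2+\dots+r^{n-1}g^{n-1})h^{-1}s^{-1}$.
   Context: $K[G]$ is the group ring (coefficients from $K$ commute with group elements). The rank of $a\in K[G]$ is the number of group elements with nonzero coefficient in $a$. *)

(* Defs.v *)
From HB Require Import structures.
From mathcomp Require Import all_boot all_order all_algebra.
From mathcomp Require Import monoid.
From mathcomp Require Import finmap.

Set Implicit Arguments.
Unset Strict Implicit.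
Unset Printing Implicit Defensive.

Import Order.TTheory GRing.Theory.
Local Open Scope fset_scope.
Local Open Scope ring_scope.

Definition is_division_ring (K : unitRingType) : Prop :=
  forall x : K, x != 0 -> x \is a GRing.unit.

Section GroupRing.
Variables (K : unitRingType) (G : groupType).

Definition KG := {fsfun G -> K with 0}.

Definition rank (a : KG) : nat := #|` finsupp a|.

Definition gr_single (c : K) (g : G) : KG := [fsfun x in [fset g] => c | 0].

Definition gr_zero : KG := [fsfun x in fset0 => (0 : K) | 0].
Definition gr_one : KG := gr_single 1 1%g.

Definition gr_add (a b : KG) : KG :=
  [fsfun x in finsupp a `|` finsupp b => a x + b x | 0].
Definition gr_opp (a : KG) : KG := [fsfun x in finsupp a => - a x | 0].
Definition gr_sub (a b : KG) : KG := gr_add a (gr_opp b).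

(* Multiplication in K[G] (coefficients commute with group elements):
   (a b)(x) = sum_g a(g) b(g^-1 x). *)
Definition gr_mul (a b : KG) : KG :=
  [fsfun x in [fset (g * h)%g | g in finsupp a, h in finsupp b] =>
     \sum_(g <- finsupp a) a g * b ((g^-1) * x)%g | 0].

Definition gr_sum (l : seq KG) : KG := foldr gr_add gr_zero l.

Definition is_inverse (a b : KG) : Prop :=
  gr_mul a b = gr_one /\ gr_mul b a = gr_one.

Definition invertible (a : KG) : Prop := exists b, is_inverse a b.

Definition one_sided_invertible (a : KG) : Prop :=
  exists b, gr_mul a b = gr_one \/ gr_mul b a = gr_one.

End GroupRing.

Definition has_order (G : groupType) (g : G) (n : nat) : Prop :=
  (0 < n)%N /\ (g ^+ n)%g = 1%g /\
  forall m : nat, (0 < m < n)%N -> (g ^+ m)%g <> 1%g.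

(* Main.v *)
Require Import Defs.
From HB Require Import structures.
From mathcomp Require Import all_boot all_order all_algebra.
From mathcomp Require Import monoid.
From mathcomp Require Import finmap.
From Stdlib Require Import Classical_Prop.

Set Implicit Arguments.
Unset Strict Implicit.
Unset Printing Implicit Defensive.
Import GRing.Theory.
Local Open Scope ring_scope.

Section Basics.
Variables (K : unitRingType) (G : groupType).
Implicit Types (a b : KG K G) (x y z : G).

Lemma gr_singleE (c : K) (g x : G) : gr_single c g x = if x == g then c else 0.
Proof. by rewrite /gr_single fsfunE in_fset1. Qed.

Lemma gr_addE a b x : gr_add a b x = a x + b x.
Proof.
rewrite /gr_add fsfunE; case: ifP => // /negbT.
rewrite in_fsetU negb_or => /andP[ha hb].
by rewrite !fsfun_dflt // addr0.
Qed.

Lemma gr_oppE a x : gr_opp a x = - a x.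
Proof.
rewrite /gr_opp fsfunE; case: ifP => // /negbT ha.
by rewrite fsfun_dflt // oppr0.
Qed.

Lemma gr_subE a b x : gr_sub a b x = a x - b x.
Proof. by rewrite /gr_sub gr_addE gr_oppE. Qed.

Lemma gr_sumE (l : seq (KG K G)) x : gr_sum l x = \sum_(c <- l) c x.
Proof.
elim: l => [|c l IH] /=; first by rewrite big_nil /gr_zero fsfunE.
by rewrite big_cons gr_addE IH.
Qed.

Lemma sum_sub_supp (A : seq G) (S : seq G) (F : G -> K) :
  uniq A -> uniq S -> {subset S <= A} -> (forall g, g \notin S -> F g = 0) ->
  \sum_(g <- A) F g = \sum_(g <- S) F g.
Proof.
move=> uA uS sSA F0.
rewrite (bigID (fun g => g \in S)) /= [X in _ + X]big1 ?addr0; last first.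
  by move=> g /F0.
rewrite -big_filter; apply: perm_big; apply: uniq_perm => //.
  exact: filter_uniq.
by move=> g; rewrite mem_filter; case gS: (g \in S) => //=; rewrite sSA.
Qed.

Lemma gr_mulE a b (A : seq G) x : uniq A -> {subset finsupp a <= A} ->
  gr_mul a b x = \sum_(g <- A) a g * b ((g^-1) * x)%g.
Proof.
move=> uA sA.
rewrite (@sum_sub_supp A (finsupp a)) //; last 2 first.
- exact: fset_uniq.
- by move=> g /fsfun_dflt ->; rewrite mul0r.
rewrite /gr_mul fsfunE; case: ifP => // /negbT hx.
rewrite big1_seq // => g /andP[_ hg].
case hb: (((g^-1) * x)%g \in finsupp b); last first.
  by rewrite (fsfun_dflt (negbT hb)) mulr0.
case/negP: hx; apply/imfset2P; exists g => //; exists ((g^-1) * x)%g => //.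
by rewrite mulVKg.
Qed.

Lemma sum_pick (C : seq G) (F : G -> K) z : uniq C -> (z \notin C -> F z = 0) ->
  \sum_(y <- C | y == z) F y = F z.
Proof.
move=> uC hz; case zC: (z \in C).
  rewrite (big_rem z) //= eqxx big1_seq ?addr0 // => y /andP[/eqP -> hy].
  by move: (uC); rewrite (perm_uniq (perm_to_rem zC)) /= => /andP[/negP].
rewrite hz ?zC // big1_seq // => y /andP[/eqP -> hy].
by rewrite hy in zC.
Qed.

Lemma gr_mulEr a b (C : seq G) x : uniq C -> {subset finsupp b <= C} ->
  gr_mul a b x = \sum_(y <- C) a (x * y^-1)%g * b y.
Proof.
move=> uC sC.
rewrite (@gr_mulE _ _ (finsupp a)) ?fset_uniq //.
transitivity (\sum_(g <- finsupp a) \sum_(y <- C | y == ((g^-1) * x)%g) a g * b y).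
  apply: eq_bigr => g _; rewrite -mulr_sumr sum_pick //.
  by move=> hz; rewrite fsfun_dflt //; apply/negP => /sC; rewrite (negbTE hz).
under eq_bigr do rewrite big_mkcond /=.
rewrite exchange_big /=; apply: eq_bigr => y _.
rewrite -(@sum_pick (finsupp a) (fun g => a g) (x * y^-1)%g) ?fset_uniq //; last first.
  by move=> h; rewrite fsfun_dflt.
rewrite mulr_suml [RHS]big_mkcond /=; apply: eq_bigr => g _.
have -> : (y == (g^-1 * x)%g) = (g == (x * y^-1)%g).
  apply/eqP/eqP => [->|->]; first by rewrite invgM invgK mulVKg.
  by rewrite invgM invgK mulgVK.
by case: ifP => //; rewrite mul0r.
Qed.

Lemma gr_single_supp (c : K) (h : G) : {subset finsupp (gr_single c h) <= [:: h]}.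
Proof.
move=> x; rewrite mem_finsupp gr_singleE inE; by case: (x == h); rewrite //= eqxx.
Qed.

Lemma gr_mul_singlel (c : K) (h : G) b x : gr_mul (gr_single c h) b x = c * b (h^-1 * x)%g.
Proof. by rewrite (@gr_mulE _ _ [:: h]) ?big_seq1 ?gr_singleE ?eqxx //; apply: gr_single_supp. Qed.

Lemma gr_mul_singler (c : K) (h : G) b x : gr_mul b (gr_single c h) x = b (x * h^-1)%g * c.
Proof. by rewrite (@gr_mulEr _ _ [:: h]) ?big_seq1 ?gr_singleE ?eqxx //; apply: gr_single_supp. Qed.

Lemma gr_oneE x : gr_one K G x = if x == 1%g then 1 else 0.
Proof. exact: gr_singleE. Qed.

End Basics.

Section Tele.
Variables (K : unitRingType) (G : groupType) (r : K) (g : G) (n : nat).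
Hypothesis gn : (g ^+ n)%g = 1%g.

Definition Sf (z : G) : K := \sum_(i <- iota 0 n) (if z == (g ^+ i)%g then r ^+ i else 0).

Let F (z : G) (i : nat) : K := if z == (g ^+ i)%g then r ^+ i else 0.

Lemma Sf_tele (z : G) (T : K) :
  (forall i, T = F z i.+1 -> True) -> True.
Proof. by []. Qed.

Lemma S_left z : Sf z - r * Sf (g^-1 * z)%g = if z == 1%g then 1 - r ^+ n else 0.
Proof.
have E : r * Sf (g^-1 * z)%g = \sum_(i <- iota 0 n) F z i.+1.
  rewrite /Sf mulr_sumr; apply: eq_bigr => i _; rewrite /F.
  have -> : ((g^-1 * z)%g == (g ^+ i)%g) = (z == (g ^+ i.+1)%g).
    by rewrite expgS; apply/eqP/eqP => [<-|->]; rewrite ?mulVKg ?mulKg.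
  by case: ifP; rewrite ?mulr0 // exprS.
have T := telescope_sumr (F z) (leq0n n); rewrite /index_iota subn0 in T.
rewrite E -[LHS]opprB -sumrB T /F gn expg0 expr0.
by case: ifP; rewrite ?subrr ?oppr0 // opprB.
Qed.

Lemma S_right z : Sf z - Sf (z * g^-1)%g * r = if z == 1%g then 1 - r ^+ n else 0.
Proof.
have E : Sf (z * g^-1)%g * r = \sum_(i <- iota 0 n) F z i.+1.
  rewrite /Sf mulr_suml; apply: eq_bigr => i _; rewrite /F.
  have -> : ((z * g^-1)%g == (g ^+ i)%g) = (z == (g ^+ i.+1)%g).
    by rewrite expgSr; apply/eqP/eqP => [<-|->]; rewrite ?mulgVK ?mulgK.
  by case: ifP; rewrite ?mul0r // exprSr.
have T := telescope_sumr (F z) (leq0n n); rewrite /index_iota subn0 in T.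
rewrite E -[LHS]opprB -sumrB T /F gn expg0 expr0.
by case: ifP; rewrite ?subrr ?oppr0 // opprB.
Qed.
End Tele.

Section Part3.
Variables (K : unitRingType) (G : groupType).
Hypothesis HK : is_division_ring K.

Lemma part3 (s r : K) (g h : G) (n : nat) :
  s != 0 -> r != 0 -> (1 < n)%N -> has_order g n -> r ^+ n != 1 ->
  is_inverse (gr_mul (gr_single s h) (gr_sub (gr_one K G) (gr_single r g)))
       (gr_mul
          (gr_mul
             (gr_mul (gr_single (1 - r ^+ n)^-1 1%g)
                (gr_sum [seq gr_single (r ^+ i) (g ^+ i)%g | i <- iota 0 n]))
             (gr_single 1 (h^-1)%g))
          (gr_single s^-1 1%g)).
Proof.
move=> s0 r0 n1 [_ [gn ho]] rn.
have g1 : g != 1%g by apply/eqP; move: (ho 1%N); rewrite n1 => /(_ isT); rewrite expg1.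
set a := gr_mul _ _; set B := gr_mul _ _.
set u := (1 - r ^+ n)^-1.
have us : s \is a GRing.unit by apply: HK.
have uu : (1 - r ^+ n) \is a GRing.unit by apply: HK; rewrite subr_eq0 eq_sym.
have aE x : a x = s * ((if (h^-1 * x)%g == 1%g then 1 else 0) - (if (h^-1 * x)%g == g then r else 0)).
  by rewrite /a gr_mul_singlel gr_subE gr_oneE gr_singleE.
have ah : a h = s by rewrite aE mulVg eqxx eq_sym (negbTE g1) subr0 mulr1.
have ahg : a (h * g)%g = - (s * r).
  by rewrite aE mulKg (negbTE g1) eqxx sub0r mulrN.
have sa : {subset finsupp a <= [:: h; (h * g)%g]}.
  move=> x; rewrite mem_finsupp aE !inE.
  case: ((h^-1 * x)%g =P 1%g) => [e|_].
    by rewrite -(mulVKg h x) e mulg1 eqxx.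
  case: ((h^-1 * x)%g =P g) => [e|_].
    by rewrite -(mulVKg h x) e eqxx orbT.
  by rewrite subrr mulr0 eqxx.
have ua : uniq [:: h; (h * g)%g].
  rewrite /= inE andbT; apply/eqP => /(congr1 (fun y => h^-1 * y)%g).
  by rewrite mulKg mulVg => /eqP; rewrite eq_sym (negbTE g1).
have SE z : gr_sum [seq gr_single (r ^+ i) (g ^+ i)%g | i <- iota 0 n] z = Sf r g n z.
  by rewrite gr_sumE big_map /Sf; apply: eq_bigr => i _; rewrite gr_singleE.
have BE y : B y = u * Sf r g n (y * h)%g * s^-1.
  by rewrite /B !gr_mul_singler gr_mul_singlel SE invg1 !mulg1 mul1g invgK mulr1.
have ur : u * r = r * u.
  by symmetry; apply/commrV/commrB; [exact: commr1 | exact/commrX/commr_refl].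
split; apply/fsfunP => x.
- rewrite (gr_mulE _ _ ua sa) big_cons big_seq1 ah ahg !BE gr_oneE.
  rewrite invgM -!mulgA.
  set z := (h^-1 * (x * h))%g.
  have -> : (s * (u * Sf r g n z * s^-1) + - (s * r) * (u * Sf r g n (g^-1 * z) * s^-1))
       = s * (u * (Sf r g n z - r * Sf r g n (g^-1 * z))) * s^-1.
    by rewrite mulrBr mulrBr !mulrA mulrBl !mulNr -(mulrA s r u) -ur (mulrA s u r).
  rewrite S_left // /z.
  have -> : ((h^-1 * (x * h))%g == 1%g) = (x == 1%g).
    by rewrite -conjgE conjg_eq1.
  case: ifP => _; last by rewrite !mulr0 mul0r.
  by rewrite /u mulVr // mulr1 divrr.
- rewrite (gr_mulEr _ _ ua sa) big_cons big_seq1 ah ahg !BE gr_oneE.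
  rewrite invgM !mulgA !mulgVK.
  have -> : (u * Sf r g n x * s^-1 * s + u * Sf r g n (x * g^-1)%g * s^-1 * - (s * r))
       = u * (Sf r g n x - Sf r g n (x * g^-1)%g * r).
    by rewrite mulrBr mulrN !mulrA !divrK.
  rewrite S_right //.
  case: ifP => _; last by rewrite !mulr0.
  by rewrite /u mulVr.
Qed.
End Part3.

Lemma fin_zero (K : unitRingType) (G : groupType) (b : KG K G) (p : nat -> G) :
  injective p -> exists k, b (p k) = 0.
Proof.
move=> ip; set N := size (enum_fset (finsupp b)).
case: (boolP (has (fun k => b (p k) == 0) (iota 0 N.+1))).
  by case/hasP => k _ /eqP; exists k.
move/hasPn => H; exfalso.
have : (size (map p (iota 0 N.+1)) <= N)%N.
  apply: uniq_leq_size; first by rewrite map_inj_uniq ?iota_uniq.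
  move=> x /mapP [k kin ->]; rewrite mem_finsupp; exact: H.
by rewrite size_map size_iota ltnn.
Qed.

Lemma pow_inj (G : groupType) (g : G) :
  (forall m, (0 < m)%N -> (g ^+ m)%g != 1%g) -> injective (fun k => (g ^+ k)%g).
Proof.
move=> H.
suff W : forall i j, (i < j)%N -> (g ^+ i)%g <> (g ^+ j)%g.
  move=> i j e; case: (ltngtP i j) => // [ij|ji]; first by case: (W _ _ ij).
  by case: (W _ _ ji).
move=> i j ij e; move: (H (j - i)%N); rewrite subn_gt0 ij => /(_ isT) /eqP; apply.
apply: (@mulgI _ (g ^+ i)%g); rewrite -expgnDr subnKC ?(ltnW ij) // mulg1 //.
Qed.

Lemma core (K : unitRingType) (G : groupType) (f : G -> K) (r d : K) (g : G)
  (T : K -> K) (S : G -> G)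
  (Hfin : forall p : nat -> G, injective p -> exists k, f (p k) = 0)
  (T0 : T 0 = 0) (Tinj : forall x, T x = 0 -> x = 0)
  (Tn : forall k x, r ^+ k = 1 -> iter k T x = x)
  (d0 : d != 0)
  (hrec : forall y, f y = (if y == 1%g then d else 0) + T (f (S y)))
  (hS1 : forall k, S (g ^+ k.+1)%g = (g ^+ k)%g)
  (hS2 : forall k, S (g^-1 ^+ k)%g = (g^-1 ^+ k.+1)%g) :
  exists n, has_order g n /\ r ^+ n != 1.
Proof.
have f1 : f 1%g = d + T (f (g^-1)%g) by rewrite hrec eqxx -(expg0 g^-1) hS2 expg1.
have iterT0 : forall k, iter k T 0 = 0 by elim=> //= k ->.
have iterTinj : forall k x, iter k T x = 0 -> x = 0.
  by elim=> //= k IH x /Tinj /IH.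
case: (classic (exists n, (0 < n)%N && ((g ^+ n)%g == 1%g))) => [EX|NEX].
  case: (ex_minnP EX) => n /andP[n0 /eqP gn] nmin.
  exists n; split.
    split=> //; split=> // m /andP[m0 mn] /eqP gm.
    by have := nmin m; rewrite m0 gm => /(_ isT); rewrite leqNgt mn.
  apply/negP => /eqP rn.
  have P k : (k < n)%N -> f (g ^+ k)%g = iter k T (f 1%g).
    elim: k => // k IH kn.
    rewrite hrec hS1 IH ?(ltnW kn) //.
    case: eqP => [gk|_]; last by rewrite add0r.
    by have := nmin k.+1; rewrite gk eqxx => /(_ isT); rewrite leqNgt kn.
  have gV : (g^-1)%g = (g ^+ n.-1)%g.
    by apply: mulg1_eq; rewrite -expgS prednK.
  move: f1; rewrite gV P ?prednK // ?ltn_predL // -iterS prednK // Tn //.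
  move/(congr1 (fun x => x - f 1%g)); rewrite subrr addrK => /eqP.
  by rewrite eq_sym (negbTE d0).
have gpos : forall m, (0 < m)%N -> (g ^+ m)%g != 1%g.
  move=> m m0; apply/negP => /eqP gm; apply: NEX; exists m; by rewrite m0 gm eqxx.
have P k : f (g ^+ k)%g = iter k T (f 1%g).
  elim: k => // k IH.
  by rewrite hrec hS1 IH (negbTE (gpos _ (ltn0Sn k))) add0r.
have [k fk] := Hfin _ (pow_inj gpos).
move: fk; rewrite P => /iterTinj f10.
have gVpos : forall k, (g^-1 ^+ k.+1)%g != 1%g.
  by move=> j; rewrite expVgn invg_eq1 gpos.
have Q j : f (g^-1 ^+ 1)%g = iter j T (f (g^-1 ^+ j.+1))%g.
  elim: j => // j IH.
  by rewrite IH iterSr [in LHS]hrec hS2 (negbTE (gVpos _)) add0r.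
have qinj : injective (fun k => (g^-1 ^+ k.+1)%g).
  move=> i j; rewrite !expVgn => /invg_inj /(pow_inj gpos) [].
  by move=> ->.
have [j fj] := Hfin _ qinj.
move: f1; rewrite f10 -(expg1 g^-1) (Q j) fj iterT0 T0 addr0 => /eqP.
by rewrite eq_sym (negbTE d0).
Qed.

Lemma rank2_dec (K : unitRingType) (G : groupType) (a : KG K G) : rank a = 2%N ->
  exists h1 h2 : G, [/\ h1 != h2, a h1 != 0, a h2 != 0 &
     {subset finsupp a <= [:: h1; h2]}].
Proof.
rewrite /rank => ra.
have mE x : (x \in finsupp a) = (x \in enum_fset (finsupp a)) by [].
have U := fset_uniq (finsupp a).
move: ra mE U; case: (enum_fset (finsupp a)) => [|h1 [|h2 [|]]] //= _ mE /andP[].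
move=> ne _; exists h1, h2; split.
- by move: ne; rewrite inE.
- by move: (mE h1); rewrite mem_finsupp !inE eqxx /= => ->.
- by move: (mE h2); rewrite mem_finsupp !inE eqxx orbT /= => ->.
- by move=> x; rewrite mE.
Qed.

Lemma iter_mull (K : unitRingType) (r x : K) k : iter k (fun y => r * y) x = r ^+ k * x.
Proof. by elim: k => [|k IH] /=; rewrite ?expr0 ?mul1r // IH exprS mulrA. Qed.

Lemma iter_mulr (K : unitRingType) (r x : K) k : iter k (fun y => y * r) x = x * r ^+ k.
Proof. by elim: k => [|k IH] /=; rewrite ?expr0 ?mulr1 // IH exprSr mulrA. Qed.

Lemma facts (K : unitRingType) (G : groupType) (HK : is_division_ring K)
  (a : KG K G) (h1 h2 : G) :
  h1 != h2 -> a h1 != 0 -> a h2 != 0 -> {subset finsupp a <= [:: h1; h2]} ->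
  one_sided_invertible a ->
  exists n, has_order (h1^-1 * h2)%g n /\ (- ((a h1)^-1 * a h2)) ^+ n != 1.
Proof.
move=> ne a1 a2 sa [b Hb].
set c1 := a h1; set c2 := a h2; set g := (h1^-1 * h2)%g; set r := - (c1^-1 * c2).
have u1 : c1 \is a GRing.unit by apply: HK.
have r0 : r != 0.
  rewrite oppr_eq0; apply/eqP => e; move/eqP: a2; apply.
  by rewrite -/c2 -(mulVKr u1 c2) e mulr0.
have ur : r \is a GRing.unit by apply: HK.
have ua : uniq [:: h1; h2] by rewrite /= inE ne.
have gV : (g^-1)%g = (h2^-1 * h1)%g by rewrite /g invgM invgK.
have T0 : forall x : K, r * x = 0 -> x = 0.
  by move=> x /(congr1 (fun y => r^-1 * y)); rewrite mulKr // mulr0.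
have T0' : forall x : K, x * r = 0 -> x = 0.
  by move=> x /(congr1 (fun y => y * r^-1)); rewrite mulrK // mul0r.
case: Hb => Hb.
- have E x : c1 * b (h1^-1 * x)%g + c2 * b (h2^-1 * x)%g = if x == 1%g then 1 else 0.
    by rewrite -gr_oneE -Hb (gr_mulE _ _ ua sa) big_cons big_seq1.
  apply: (@core _ _ (fun y => b (y * h1^-1)%g) r c1^-1 g (fun x => r * x)
            (fun y => (g^-1 * y)%g)).
  + by move=> p ip; apply: fin_zero => i j /mulIg /ip.
  + by rewrite mulr0.
  + exact: T0.
  + by move=> k x rk; rewrite iter_mull rk mul1r.
  + by rewrite invr_neq0.
  + move=> y; have := E (h1 * y * h1^-1)%g.
    have -> : (h1^-1 * (h1 * y * h1^-1))%g = (y * h1^-1)%g by rewrite -mulgA mulKg.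
    have -> : (h2^-1 * (h1 * y * h1^-1))%g = (g^-1 * y * h1^-1)%g by rewrite gV !mulgA.
    have -> : ((h1 * y * h1^-1)%g == 1%g) = (y == 1%g).
      by rewrite -mulgA -{1}(invgK h1) -conjgE conjg_eq1.
    move=> Ey; rewrite -[LHS](mulKr u1) -(addrK (c2 * b (g^-1 * y * h1^-1)%g) (c1 * _)) Ey.
    rewrite /r mulNr -mulrA mulrBr; case: ifP => _; first by rewrite mulr1.
    by rewrite mulr0 add0r.
  + by move=> k; rewrite expgS mulKg.
  + by move=> k; rewrite expgS.
- have E x : b (x * h1^-1)%g * c1 + b (x * h2^-1)%g * c2 = if x == 1%g then 1 else 0.
    by rewrite -gr_oneE -Hb (gr_mulEr _ _ ua sa) big_cons big_seq1.
  apply: (@core _ _ (fun y => b (y * h1^-1)%g * c1) r 1 g (fun x => x * r)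
            (fun y => (y * g^-1)%g)).
  + move=> p ip; have pi : injective (fun k => p k * h1^-1)%g.
      by move=> i j /mulIg /ip.
    by have [k bk] := fin_zero b pi; exists k; rewrite bk mul0r.
  + by rewrite mul0r.
  + exact: T0'.
  + by move=> k x rk; rewrite iter_mulr rk mulr1.
  + exact: oner_neq0.
  + move=> y; have := E y.
    have -> : (y * h2^-1)%g = (y * g^-1 * h1^-1)%g by rewrite gV -mulgA mulgK.
    move=> Ey; rewrite -(addrK (b (y * g^-1 * h1^-1)%g * c2) (b _ * c1)) Ey.
    by rewrite /r mulrN -mulrA mulVKr.
  + by move=> k; rewrite expgSr mulgK.
  + by move=> k; rewrite expgSr.
Qed.

Lemma dec_eq (K : unitRingType) (G : groupType) (HK : is_division_ring K)
  (a : KG K G) (h1 h2 : G) :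
  h1 != h2 -> a h1 != 0 -> {subset finsupp a <= [:: h1; h2]} ->
  a = gr_mul (gr_single (a h1) h1)
        (gr_sub (gr_one K G) (gr_single (- ((a h1)^-1 * a h2)) (h1^-1 * h2)%g)).
Proof.
move=> ne a1 sa; have u1 : a h1 \is a GRing.unit by apply: HK.
have g1 : (h1^-1 * h2)%g != 1%g.
  by apply: contra ne => /eqP e; rewrite -(mulVKg h1 h2) e mulg1.
apply/fsfunP => x; rewrite gr_mul_singlel gr_subE gr_oneE gr_singleE.
case: (x =P h1) => [->|nx1].
  by rewrite mulVg eqxx eq_sym (negbTE g1) subr0 mulr1.
case: (x =P h2) => [->|nx2].
  by rewrite (negbTE g1) eqxx sub0r opprK mulVKr.
have -> : ((h1^-1 * x)%g == 1%g) = false.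
  by apply/negP => /eqP e; apply: nx1; rewrite -(mulVKg h1 x) e mulg1.
have -> : ((h1^-1 * x)%g == (h1^-1 * h2)%g) = false.
  by apply/negP => /eqP /mulgI.
rewrite subrr mulr0; apply/fsfun_dflt/negP => /sa; rewrite !inE.
by case/orP => /eqP.
Qed.

Lemma keyL (K : unitRingType) (G : groupType) (HK : is_division_ring K) (a : KG K G) :
  rank a = 2%N -> one_sided_invertible a ->
  exists (s r : K) (g h : G) (n : nat),
        [/\ s != 0, r != 0, (1 < n)%N, has_order g n & r ^+ n != 1] /\
        a = gr_mul (gr_single s h) (gr_sub (gr_one K G) (gr_single r g)).
Proof.
move=> ra osi; have [h1 [h2 [ne a1 a2 sa]]] := rank2_dec ra.
have [n [ho rn]] := facts HK ne a1 a2 sa osi.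
exists (a h1), (- ((a h1)^-1 * a h2)), (h1^-1 * h2)%g, h1, n; split; last exact: dec_eq.
have u1 : a h1 \is a GRing.unit by apply: HK.
split=> //.
- rewrite oppr_eq0; apply/eqP => e; move/eqP: a2; apply.
  by rewrite -(mulVKr u1 (a h2)) e mulr0.
- case: ho => n0 [gn _]; clear rn; move: n0 gn; case: n => [|[|n]] // _.
  by rewrite expg1 => /eqP; rewrite -(inj_eq (@mulgI _ h1)) mulg1 mulVKg eq_sym (negbTE ne).
Qed.

Unset Implicit Arguments.
Set Strict Implicit.

Theorem proposition2p2 (K : unitRingType) (HK : is_division_ring K)
    (G : groupType) :
  (forall a : KG K G, rank a = 2%N -> one_sided_invertible a -> invertible a)
  /\
  (forall a : KG K G, rank a = 2%N ->
     (invertible a <->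
      exists (s r : K) (g h : G) (n : nat),
        [/\ s != 0, r != 0, (1 < n)%N, has_order g n & r ^+ n != 1] /\
        a = gr_mul (gr_single s h) (gr_sub (gr_one K G) (gr_single r g))))
  /\
  (forall (a : KG K G) (s r : K) (g h : G) (n : nat),
     rank a = 2%N -> s != 0 -> r != 0 -> (1 < n)%N -> has_order g n ->
     r ^+ n != 1 ->
     a = gr_mul (gr_single s h) (gr_sub (gr_one K G) (gr_single r g)) ->
     is_inverse a
       (gr_mul
          (gr_mul
             (gr_mul (gr_single (1 - r ^+ n)^-1 1%g)
                (gr_sum [seq gr_single (r ^+ i) (g ^+ i)%g | i <- iota 0 n]))
             (gr_single 1 (h^-1)%g))
          (gr_single s^-1 1%g))).
Proof.
have P3 : forall (a : KG K G) (s r : K) (g h : G) (n : nat),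
     s != 0 -> r != 0 -> (1 < n)%N -> has_order g n -> r ^+ n != 1 ->
     a = gr_mul (gr_single s h) (gr_sub (gr_one K G) (gr_single r g)) ->
     invertible a.
  by move=> a s r g h n s0 r0 n1 ho rn ->; eexists; apply: (@part3 K G HK s r g h n s0 r0 n1 ho rn).
split; last split.
- move=> a ra osi; have [s [r [g [h [n [[s0 r0 n1 ho rn] ->]]]]]] := keyL HK ra osi.
  exact: P3 _ _ _ _ _ _ s0 r0 n1 ho rn erefl.
- move=> a ra; split.
    move=> [b [ab _]]; apply: (keyL HK ra); by exists b; left.
  by move=> [s [r [g [h [n [[s0 r0 n1 ho rn] ->]]]]]]; exact: P3 _ _ _ _ _ _ s0 r0 n1 ho rn erefl.
- by move=> a s r g h n _ s0 r0 n1 ho rn ->; apply: (@part3 K G HK s r g h n s0 r0 n1 ho rn).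
Qed.
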